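(* Every invertible element of $\mathcal{A}(\bm{p})$ is an exponential: $e^{\mathcal{A}(\bm{p})}=\mathcal{A}(\bm{p})^{-1}$, where $e^{\mathcal{A}(\bm{p})}=\{e^f:f\in\mathcal{A}(\bm{p})\}$ and $\mathcal{A}(\bm{p})^{-1}$ is the group of invertible elements. Consequently the first Čech cohomology group with integer coefficients of the maximal ideal space is trivial: $H^1(M(\mathcal{A}(\bm{p})),\mathbb{Z})=\{0\}$.
   Context: Fix $\bm{p}:\mathbb{N}_0\to(0,\infty)$ with $\lim_{n\to\infty}\bm{p}(n)^{1/n}=\infty$. For an entire function $f$ write $f(z)=\sum_{n\ge0}\widehat f(n)z^n$. $\mathcal{A}(\bm{p})$ is the set of entire functions $f$ with $\sup_{n\ge 0}\bm{p}(n)|\widehat f(n)|<\infty$, with pointwise addition and scalar multiplication, the weighted Hadamard product $(f\ast g)(z)=\sum_{n\ge0}\bm{p}(n)\widehat f(n)\widehat g(n)z^n$, and norm $\|f\|=\sup_{n\ge0}\bm{p}(n)|\widehat f(n)|$; it is a commutative unital complex semisimple Banach algebra with unit $\varepsilon(z)=\sum_{n\ge0}\frac{z^n}{\bm{p}(n)}$. Exponentials are $e^f=\sum_{m\ge0}f^m/m!$ with $\ast$-powers. $M(\mathcal{A}(\bm{p}))$ is the maximal ideal space (nonzero multiplicative linear functionals with the Gelfand topology). *)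

(* Defs.v *)
From HB Require Import structures.
From mathcomp Require Import all_boot all_order all_algebra.
From mathcomp Require Import all_classical all_reals all_analysis.
From mathcomp Require Import complex.
Set Implicit Arguments. Unset Strict Implicit. Unset Printing Implicit Defensive.
Import Order.TTheory GRing.Theory Num.Theory.
Local Open Scope ring_scope.
Local Open Scope classical_set_scope.
Local Open Scope complex_scope.

Section Defs.
Variable R : realType.
Local Notation C := R[i].
Local Notation normc := (@Normc.normc R).

(* An entire function is identified with its Taylor coefficient sequence
   (fhat n)_n; the weighted bound forces the series to be entire. *)
Definition coeffs := nat -> C.

Definition inA (p : nat -> R) (a : coeffs) : Prop :=
  exists K : R, forall n, p n * normc (a n) <= K.

Definition hprod (p : nat -> R) (a b : coeffs) : coeffs :=
  fun n => ((p n)%:C)%C * a n * b n.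

Definition unitA (p : nat -> R) : coeffs := fun n => (((p n)^-1)%:C)%C.

Definition hpow (p : nat -> R) (a : coeffs) (m : nat) : coeffs :=
  iter m (hprod p a) (unitA p).

Definition expPartial (p : nat -> R) (a : coeffs) (N : nat) : coeffs :=
  fun n => \sum_(m < N) ((m`!)%:R)^-1 * hpow p a m n.

Definition is_expA (p : nat -> R) (a g : coeffs) : Prop :=
  inA p g /\
  forall eps : R, 0 < eps -> exists N0 : nat, forall N : nat, (N0 <= N)%N ->
    forall n, p n * normc (expPartial p a N n - g n) <= eps.

Definition invertibleA (p : nat -> R) (g : coeffs) : Prop :=
  inA p g /\ exists h : coeffs, inA p h /\ hprod p g h = unitA p.

(* A functional is
   represented by a function on all coefficient sequences, normalised to be
   0 outside A(p), so that characters of A(p) correspond bijectively to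
   the functions satisfying isChar. *)
Definition isChar (p : nat -> R) (phi : coeffs -> C) : Prop :=
  [/\ (forall a, ~ inA p a -> phi a = 0),
      (forall a b, inA p a -> inA p b -> phi (fun n => a n + b n) = phi a + phi b),
      (forall (c : C) a, inA p a -> phi (fun n => c * a n) = c * phi a),
      (forall a b, inA p a -> inA p b -> phi (hprod p a b) = phi a * phi b)
    & exists a, inA p a /\ phi a != 0].

Definition maxIdealSpace (p : nat -> R) : set (coeffs -> C) := [set phi | isChar p phi].

(* Open sets of the Gelfand topology (relative weak-* topology) on M(A(p)):
   U is open iff each of its points has a basic weak-* neighbourhood in U. *)
Definition gelfand_open (p : nat -> R) (U : set (coeffs -> C)) : Prop :=
  U `<=` maxIdealSpace p /\
  forall phi, U phi -> exists (k : nat) (fs : nat -> coeffs) (eps : R),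
    (forall i, (i < k)%N -> inA p (fs i)) /\ 0 < eps /\
    forall psi, maxIdealSpace p psi ->
      (forall i, (i < k)%N -> normc (psi (fs i) - phi (fs i)) < eps) -> U psi.

End Defs.

(* Vanishing of the first Cech cohomology group with integer coefficients
   of the space X (open sets given by [op]):  every Cech 1-cocycle on an
   open cover becomes a coboundary after passing to some refinement, i.e.
   the direct limit over open covers of H^1(nerve, Z) is zero. *)
Definition cech_H1_Z_trivial (T : Type) (X : set T) (op : set T -> Prop) : Prop :=
  forall (I : Type) (U : I -> set T),
    (forall i, op (U i)) -> X `<=` \bigcup_i U i ->
    forall g : I -> I -> int,
      (forall i j k, (X `&` U i `&` U j `&` U k) !=set0 -> g i j + g j k = g i k) ->
      exists (J : Type) (V : J -> set T) (tau : J -> I),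
        [/\ (forall j, op (V j)), X `<=` \bigcup_j V j,
            (forall j, V j `<=` U (tau j)) &
            exists h : J -> int, forall j k, (X `&` V j `&` V k) !=set0 ->
              g (tau j) (tau k) = h k - h j].

(* Main.v *)
Require Import Defs.
Set Warnings "-notation-overridden,-ambiguous-paths,-notation-incompatible-prefix,-deprecated".
From HB Require Import structures.
From mathcomp Require Import all_boot all_order all_algebra.
From mathcomp Require Import all_classical all_reals all_analysis.
From mathcomp Require Import complex.
From mathcomp Require Import ring lra zify.
Import Order.TTheory GRing.Theory Num.Theory.
Import numFieldNormedType.Exports.
Local Open Scope ring_scope.
Local Open Scope classical_set_scope.
Set Implicit Arguments. Unset Strict Implicit. Unset Printing Implicit Defensive.
Section CplxBasic.
Variable R : realType.
Local Notation C := R[i].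
Local Notation nc := (@Normc.normc R).
Local Notation Re := (@complex.Re R).
Local Notation Im := (@complex.Im R).

Lemma nc_real (x : R) : nc (x%:C)%C = `|x|.
Proof. by rewrite /Normc.normc /= expr0n /= addr0 sqrtr_sqr. Qed.

Lemma nc_ge0 (z : C) : 0 <= nc z.
Proof. by case: z => a b; rewrite /Normc.normc sqrtr_ge0. Qed.

Lemma nc_Re (z : C) : `|Re z| <= nc z.
Proof.
case: z => a b /=; rewrite /Normc.normc -sqrtr_sqr ler_wsqrtr //.
by rewrite lerDl sqr_ge0.
Qed.

Lemma nc_Im (z : C) : `|Im z| <= nc z.
Proof.
case: z => a b /=; rewrite /Normc.normc -sqrtr_sqr ler_wsqrtr //.
by rewrite lerDr sqr_ge0.
Qed.

Lemma nc_le_ReIm (z : C) : nc z <= `|Re z| + `|Im z|.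
Proof.
case: z => a b /=; rewrite /Normc.normc.
have h0 : 0 <= `|a| + `|b| by rewrite addr_ge0.
rewrite -(ger0_norm h0) -sqrtr_sqr.
apply: ler_wsqrtr.
rewrite sqrrD (real_normK (num_real a)) (real_normK (num_real b)).
rewrite addrAC lerDl.
by apply: mulrn_wge0; apply: mulr_ge0.
Qed.

Lemma ncX (z : C) n : nc (z ^+ n) = nc z ^+ n.
Proof.
elim: n => [|n IH]; first by rewrite !expr0 Normc.normc1.
by rewrite !exprS Normc.normcM IH.
Qed.

Lemma nc_sum n (F : nat -> C) : nc (\sum_(i < n) F i) <= \sum_(i < n) nc (F i).
Proof.
elim: n => [|n IH]; first by rewrite !big_ord0 Normc.normc0.
rewrite !big_ord_recr /=; apply: le_trans (le_normcD _ _) _.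
by rewrite lerD2r.
Qed.

Lemma nc_sum_nat m n (F : nat -> C) :
  nc (\sum_(m <= i < n) F i) <= \sum_(m <= i < n) nc (F i).
Proof.
elim: n => [|n IH]; first by rewrite !big_geq // Normc.normc0.
case: (leqP m n) => mn.
  rewrite !big_nat_recr //=; apply: le_trans (le_normcD _ _) _.
  by rewrite lerD2r.
by rewrite !big_geq // Normc.normc0.
Qed.

Lemma ncB (a b : C) : nc (a - b) = nc (b - a).
Proof. by rewrite -normcN opprB. Qed.

Lemma nc_tri (a b c : C) : nc (a - c) <= nc (a - b) + nc (b - c).
Proof. by apply: le_trans (le_normcD _ _); rewrite addrA subrK. Qed.

End CplxBasic.
Section GenExp.
Variable F : numFieldType.

Definition tm (z : F) (m : nat) : F := (m`!%:R)^-1 * z ^+ m.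
Definition Pe (N : nat) (z : F) : F := \sum_(m < N) tm z m.

Lemma fact_neq0 m : (m`!%:R : F) != 0.
Proof. by rewrite pnatr_eq0 -lt0n fact_gt0. Qed.

Lemma binom_term (a b : F) m j : (j <= m)%N ->
  (m`!%:R)^-1 * (b ^+ (m - j) * a ^+ j *+ 'C(m, j)) = tm a j * tm b (m - j).
Proof.
move=> jm; rewrite /tm -mulrnAr -mulr_natl.
have h : (m`!%:R : F) = 'C(m, j)%:R * (j`!%:R * (m - j)`!%:R).
  by rewrite -!natrM bin_fact.
rewrite h.
have h1 : ('C(m, j)%:R : F) != 0 by rewrite pnatr_eq0 -lt0n bin_gt0.
have h2 := fact_neq0 j; have h3 := fact_neq0 (m - j).
by field; rewrite h1 h2 h3.
Qed.

Definition Tri (N : nat) (a b : F) : F :=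
  \sum_(j < N) \sum_(0 <= k < N - j) tm a j * tm b k.

Lemma Pe_add N a b : Pe N (a + b) = Tri N a b.
Proof.
elim: N => [|N IH]; first by rewrite /Pe /Tri !big_ord0.
rewrite /Pe big_ord_recr /= -/(Pe N (a + b)) IH /Tri.
rewrite big_ord_recr /= subSnn big_nat1.
have -> : \sum_(j < N) \sum_(0 <= k < N.+1 - j) tm a j * tm b k =
          \sum_(j < N) (\sum_(0 <= k < N - j) tm a j * tm b k
                        + tm a j * tm b (N - j)).
  apply: eq_bigr => j _; rewrite subSn; last exact: ltnW (ltn_ord j).
  by rewrite big_nat_recr.
rewrite big_split /= -!addrA; congr (_ + _).
rewrite /tm [a + b]addrC exprDn mulr_sumr.
rewrite big_ord_recr /= subnn.
congr (_ + _).
  by apply: eq_bigr => j _; rewrite binom_term ?(ltnW (ltn_ord j)).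
by rewrite binn !expr0 mul1r mulr1n fact0 invr1 !mul1r mulr1.
Qed.

End GenExp.
Section GenExp2.
Variable F : numFieldType.

Definition Dd (N : nat) (a b : F) : F :=
  \sum_(j < N) tm a j * \sum_(N - j <= k < N) tm b k.

Lemma Pe_nat N (z : F) : Pe N z = \sum_(0 <= k < N) tm z k.
Proof. by rewrite /Pe big_mkord. Qed.

Lemma Dd_eq N a b : Pe N a * Pe N b - Pe N (a + b) = Dd N a b.
Proof.
rewrite Pe_add /Tri /Dd {1}/Pe mulr_suml -sumrB.
apply: eq_bigr => j _.
rewrite Pe_nat (@big_cat_nat _ _ _ (N - j)) //= ?leq_subr // mulrDr mulr_sumr.
by rewrite addrC addKr.
Qed.

End GenExp2.
Section RealExp.
Variable R : realType.
Local Notation C := R[i].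
Local Notation nc := (@Normc.normc R).

Lemma Pe_series (x : R) N : Pe N x = series (exp_coeff x) N.
Proof.
rewrite Pe_nat /series /=; apply: eq_bigr => k _.
by rewrite /tm /exp_coeff /= mulrC.
Qed.

Lemma Pe_cvg (x : R) : Pe n x @[n --> \oo] --> expR x.
Proof.
have -> : (fun n => Pe n x) = series (exp_coeff x).
  by apply: funext => n; rewrite Pe_series.
exact: is_cvg_series_exp_coeff.
Qed.

Lemma tm_ge0 (x : R) k : 0 <= x -> 0 <= tm x k.
Proof. by move=> x0; rewrite /tm mulr_ge0 // ?invr_ge0 ?ler0n // exprn_ge0. Qed.

Lemma tm_mono (s t : R) k : 0 <= s -> s <= t -> tm s k <= tm t k.
Proof.
move=> s0 st; rewrite /tm ler_wpM2l ?invr_ge0 ?ler0n //.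
by rewrite lerXn2r // ?nnegrE // (le_trans s0 st).
Qed.

Lemma Pe_diff_nat (z : C) N M : (N <= M)%N ->
  Pe M z - Pe N z = \sum_(N <= k < M) tm z k.
Proof.
move=> NM; rewrite !Pe_nat (@big_cat_nat _ _ _ N 0 M) //=.
by rewrite addrC addrK.
Qed.

Lemma Pe_diff_natR (z : R) N M : (N <= M)%N ->
  Pe M z - Pe N z = \sum_(N <= k < M) tm z k.
Proof.
move=> NM; rewrite !Pe_nat (@big_cat_nat _ _ _ N 0 M) //=.
by rewrite addrC addrK.
Qed.

Lemma Pe_monoN (x : R) N M : 0 <= x -> (N <= M)%N -> Pe N x <= Pe M x.
Proof.
move=> x0 NM; rewrite -subr_ge0 Pe_diff_natR //.
by apply: sumr_ge0 => k _; apply: tm_ge0.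
Qed.

Lemma Pe_le_exp (x : R) N : 0 <= x -> Pe N x <= expR x.
Proof.
move=> x0.
have h : {homo (fun n => Pe n x) : n m / (n <= m)%N >-> n <= m}.
  by move=> n m nm; apply: Pe_monoN.
have := nondecreasing_cvgn_le h (cvgP _ (@Pe_cvg x)) N.
by rewrite (cvg_lim _ (@Pe_cvg x)).
Qed.

Lemma nc_natV n : nc ((n%:R : C)^-1) = (n%:R)^-1.
Proof.
have -> : (n%:R : C) = ((n%:R : R)%:C)%C by rewrite rmorph_nat.
rewrite Normc.normcV nc_real ger0_norm //.
Qed.

Lemma nc_tm (z : C) k : nc (tm z k) = tm (nc z) k.
Proof. by rewrite /tm Normc.normcM nc_natV ncX. Qed.

Lemma nc_Pe_diff (z : C) (K : R) N M : nc z <= K -> (N <= M)%N ->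
  nc (Pe M z - Pe N z) <= Pe M K - Pe N K.
Proof.
move=> zK NM; rewrite Pe_diff_nat // Pe_diff_natR //.
apply: le_trans; first apply: nc_sum_nat.
apply: ler_sum => k _; rewrite nc_tm; apply: tm_mono => //; exact: nc_ge0.
Qed.

Lemma nc_Pe (z : C) N : nc (Pe N z) <= Pe N (nc z).
Proof.
apply: le_trans; first apply: nc_sum.
by apply: ler_sum => k _; rewrite nc_tm.
Qed.

Lemma Dd_ge0 (s t : R) N : 0 <= s -> 0 <= t -> 0 <= Dd N s t.
Proof.
move=> s0 t0; apply: sumr_ge0 => j _; apply: mulr_ge0; first exact: tm_ge0.
by apply: sumr_ge0 => k _; apply: tm_ge0.
Qed.

Lemma Dd_mono (s t s' t' : R) N : 0 <= s -> s <= s' -> 0 <= t -> t <= t' ->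
  Dd N s t <= Dd N s' t'.
Proof.
move=> s0 ss t0 tt; apply: ler_sum => j _.
apply: ler_pM; first exact: tm_ge0.
- by apply: sumr_ge0 => k _; apply: tm_ge0.
- exact: tm_mono.
by apply: ler_sum => k _; apply: tm_mono.
Qed.

Lemma nc_Dd (a b : C) N : nc (Dd N a b) <= Dd N (nc a) (nc b).
Proof.
rewrite /Dd.
have := nc_sum N (fun j : nat => tm a j * \sum_(N - j <= k < N) tm b k).
move=> /le_trans; apply.
apply: ler_sum => j _.
rewrite Normc.normcM nc_tm; apply: ler_wpM2l; first exact/tm_ge0/nc_ge0.
have := nc_sum_nat (N - j) N (tm b).
move=> /le_trans; apply.
by apply: ler_sum => k _; rewrite nc_tm.
Qed.

Lemma Dd_cvg0 (s t : R) : Dd n s t @[n --> \oo] --> 0.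
Proof.
have -> : (fun n => Dd n s t) = (fun n => Pe n s * Pe n t - Pe n (s + t)).
  by apply: funext => n; rewrite Dd_eq.
have -> : (0 : R) = expR s * expR t - expR (s + t) by rewrite expRD subrr.
by apply: cvgB; [apply: cvgM|]; apply: Pe_cvg.
Qed.

End RealExp.
Section CExp.
Variable R : realType.
Local Notation C := R[i].
Local Notation nc := (@Normc.normc R).
Local Notation Re := (@complex.Re R).
Local Notation Im := (@complex.Im R).

Lemma cvg_absB0 (u : nat -> R) (L : R) :
  u n @[n --> \oo] --> L -> `|u n - L| @[n --> \oo] --> 0.
Proof.
move=> H.
have H2 : (u n - L) @[n --> \oo] --> L - L.
  by apply: cvgB => //; exact: cvg_cst.
have := cvg_norm H2; rewrite subrr normr0.
by move=> h; apply: h; exact: _.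
Qed.

Lemma ReD (a b : C) : Re (a + b) = Re a + Re b.
Proof. by case: a => ? ?; case: b. Qed.
Lemma ImD (a b : C) : Im (a + b) = Im a + Im b.
Proof. by case: a => ? ?; case: b. Qed.
Lemma ReRM (c : R) (w : C) : Re ((c%:C)%C * w) = c * Re w.
Proof. by case: w => a b /=; rewrite mul0r subr0. Qed.
Lemma ImRM (c : R) (w : C) : Im ((c%:C)%C * w) = c * Im w.
Proof. by case: w => a b /=; rewrite mul0r addr0. Qed.

Lemma Re_sum N (F : nat -> C) : Re (\sum_(i < N) F i) = \sum_(i < N) Re (F i).
Proof.
elim: N => [|N IH]; first by rewrite !big_ord0.
by rewrite !big_ord_recr /= ReD IH.
Qed.
Lemma Im_sum N (F : nat -> C) : Im (\sum_(i < N) F i) = \sum_(i < N) Im (F i).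
Proof.
elim: N => [|N IH]; first by rewrite !big_ord0.
by rewrite !big_ord_recr /= ImD IH.
Qed.

Lemma mulI (a b : R) : ('i%C : C) * (a +i* b)%C = (- b +i* a)%C.
Proof. by simpc. Qed.

Lemma iX k : ('i%C : C) ^+ k =
  (((~~ odd k)%:R * (-1) ^+ (k./2)) +i* ((odd k)%:R * (-1) ^+ (k.-1./2)))%C.
Proof.
elim: k => [|k IH]; first by rewrite expr0 /= mul1r mul0r.
rewrite exprS IH mulI /= negbK; congr (_ +i* _)%C.
case/boolP: (odd k) => ok /=.
  have km : k = (k./2).*2.+1 by rewrite -{1}(odd_double_half k) ok.
  rewrite km /= !doubleK !mul1r exprS.
  by rewrite mulN1r.
by rewrite !mul0r oppr0.
Qed.

Lemma real_tm (y : R) k : ((tm y k)%:C)%C = tm ((y%:C)%C) k.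
Proof. by rewrite /tm rmorphM rmorphXn fmorphV rmorph_nat. Qed.

Lemma Pe_real (x : R) N : ((Pe N x)%:C)%C = Pe N ((x%:C)%C).
Proof.
rewrite /Pe rmorph_sum; apply: eq_bigr => k _; exact: real_tm.
Qed.

Lemma tm_iy (y : R) k : tm ('i%C * (y%:C)%C) k = ((tm y k)%:C)%C * ('i%C ^+ k).
Proof. by rewrite real_tm /tm exprMn; ring. Qed.

Lemma Re_Pe_iy (y : R) N : Re (Pe N ('i%C * (y%:C)%C)) = series (cos_coeff y) N.
Proof.
rewrite /Pe Re_sum /series /= big_mkord; apply: eq_bigr => k _.
rewrite tm_iy ReRM iX /= /tm.
by rewrite /cos_coeff /= -exprnP; ring.
Qed.

Lemma Im_Pe_iy (y : R) N : Im (Pe N ('i%C * (y%:C)%C)) = series (sin_coeff y) N.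
Proof.
rewrite /Pe Im_sum /series /= big_mkord; apply: eq_bigr => k _.
rewrite tm_iy ImRM iX /= /tm.
by rewrite /sin_coeff /= ?exprnP; ring.
Qed.

End CExp.
Section CExp2.
Variable R : realType.
Local Notation C := R[i].
Local Notation nc := (@Normc.normc R).
Local Notation Re := (@complex.Re R).
Local Notation Im := (@complex.Im R).

Definition cis (y : R) : C := (cos y +i* sin y)%C.
Definition Ex (z : C) : C := ((expR (Re z))%:C)%C * cis (Im z).

Lemma cos_cvg (y : R) : series (cos_coeff y) n @[n --> \oo] --> cos y.
Proof. rewrite unlock; exact: is_cvg_series_cos_coeff. Qed.
Lemma sin_cvg (y : R) : series (sin_coeff y) n @[n --> \oo] --> sin y.
Proof. rewrite unlock; exact: is_cvg_series_sin_coeff. Qed.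

Lemma ReB (a b : C) : Re (a - b) = Re a - Re b.
Proof. by case: a => ? ?; case: b. Qed.
Lemma ImB (a b : C) : Im (a - b) = Im a - Im b.
Proof. by case: a => ? ?; case: b. Qed.

Lemma nc_i : nc ('i%C) = 1.
Proof. by rewrite /Normc.normc /= expr0n expr1n add0r sqrtr1. Qed.

Lemma Pe_Ex_cvg (z : C) : nc (Pe n z - Ex z) @[n --> \oo] --> 0.
Proof.
set x := Re z; set y := Im z.
set X : C := (x%:C)%C; set Y : C := 'i%C * (y%:C)%C.
have zXY : z = X + Y by rewrite /X /Y /x /y -complexE.
have ncY : nc Y = `|y| by rewrite Normc.normcM nc_i mul1r nc_real.
have ncX : nc X = `|x| by rewrite nc_real.
pose h n := `|Pe n x - expR x| * Pe n `|y| + expR x * (`|series (cos_coeff y) n - cos y|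
   + `|series (sin_coeff y) n - sin y|) + Dd n `|x| `|y|.
apply: (@squeeze_cvgr _ _ _ _ (fun=> 0) h).
- near=> n; rewrite nc_ge0 /=.
  have -> : Pe n z - Ex z = (Pe n X - ((expR x)%:C)%C) * Pe n Y
     + ((expR x)%:C)%C * (Pe n Y - cis y) - Dd n X Y.
    rewrite -Dd_eq -zXY /Ex -/x -/y; ring.
  apply: le_trans; first apply: le_normcD.
  rewrite normcN /h; apply: lerD; last first.
    by rewrite -ncX -ncY; apply: nc_Dd.
  apply: le_trans; first apply: le_normcD.
  apply: lerD.
    rewrite Normc.normcM -Pe_real -rmorphB nc_real; apply: ler_wpM2l => //.
    by rewrite -ncY; apply: nc_Pe.
  rewrite Normc.normcM nc_real ger0_norm ?expR_ge0 //; apply: ler_wpM2l.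
    exact: expR_ge0.
  apply: le_trans; first apply: nc_le_ReIm.
  by rewrite ReB ImB /Y Re_Pe_iy Im_Pe_iy.
- exact: cvg_cst.
have -> : (0 : R) = 0 * expR `|y| + expR x * (0 + 0) + 0.
  by rewrite !(mul0r, mulr0, addr0).
apply: cvgD; last exact: Dd_cvg0.
apply: cvgD; first by apply: cvgM; [apply: cvg_absB0; apply: Pe_cvg|apply: Pe_cvg].
apply: cvgM; first exact: cvg_cst.
by apply: cvgD; apply: cvg_absB0; [apply: cos_cvg|apply: sin_cvg].
Unshelve. all: by end_near.
Qed.

End CExp2.
Section CExp3.
Variable R : realType.
Local Notation C := R[i].
Local Notation nc := (@Normc.normc R).
Local Notation Re := (@complex.Re R).
Local Notation Im := (@complex.Im R).

Lemma near_oo_ex (P : nat -> Prop) :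
  (\forall n \near \oo, P n) -> exists N, forall n, (N <= n)%N -> P n.
Proof. case=> N _ HN; exists N => n Nn; exact: HN. Qed.

Lemma Pe_Ex_bound (z : C) (K : R) N : nc z <= K ->
  nc (Pe N z - Ex z) <= expR K - Pe N K.
Proof.
move=> zK.
have K0 : 0 <= K := le_trans (nc_ge0 z) zK.
have c1 : (Pe n K - Pe N K + nc (Pe n z - Ex z)) @[n --> \oo] --> expR K - Pe N K + 0.
  apply: cvgD; last exact: Pe_Ex_cvg.
  by apply: cvgB; [apply: Pe_cvg|apply: cvg_cst].
rewrite -[X in _ <= X]addr0.
apply: (ler_cvg_to (cvg_cst _) c1).
near=> n.
have Nn : (N <= n)%N by near: n; exact: nbhs_infty_ge.
apply: le_trans; first exact: (nc_tri (Pe N z) (Pe n z) (Ex z)).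
by rewrite lerD2r ncB; apply: nc_Pe_diff.
Unshelve. all: by end_near.
Qed.

Lemma Pe_unif (K : R) (eps : R) : 0 < eps ->
  exists N0, forall N, (N0 <= N)%N -> expR K - Pe N K <= eps.
Proof.
move=> e0.
have H : \forall t \near \oo, `|expR K - Pe t K| <= eps.
  exact: (cvgr_dist_le _ _ (Pe_cvg (x:=K)) _ e0).
have [N0 HN] := near_oo_ex H; exists N0 => N /HN.
by apply: le_trans; apply: ler_norm.
Qed.

Lemma cisD (u v : R) : cis (u + v) = cis u * cis v.
Proof. by rewrite /cis cosD sinD; simpc; congr (_ +i* _)%C; ring. Qed.

Lemma Ex_add (a b : C) : Ex (a + b) = Ex a * Ex b.
Proof.
rewrite /Ex ReD ImD expRD cisD rmorphM /=; ring.
Qed.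

Lemma Ex0 : Ex (0 : C) = 1.
Proof. by rewrite /Ex /= expR0 /cis cos0 sin0 mul1r. Qed.

Lemma Ex_N (z : C) : Ex z * Ex (- z) = 1.
Proof. by rewrite -Ex_add subrr Ex0. Qed.

Lemma nc_cis (y : R) : nc (cis y) = 1.
Proof. by rewrite /cis /Normc.normc cos2Dsin2 sqrtr1. Qed.

Lemma nc_Ex (z : C) : nc (Ex z) = expR (Re z).
Proof. by rewrite /Ex Normc.normcM nc_cis mulr1 nc_real ger0_norm // expR_ge0. Qed.

Lemma Ex_surj (w : C) : w != 0 ->
  exists z, Ex z = w /\ nc z <= `|ln (nc w)| + pi.
Proof.
move=> w0.
set r := nc w.
have r0 : 0 < r.
  rewrite lt_def nc_ge0 andbT; apply/eqP => /Normc.eq0_normc => h.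
  by rewrite h eqxx in w0.
set c := Re w / r; set s := Im w / r.
have rr : r ^+ 2 = Re w ^+ 2 + Im w ^+ 2.
  rewrite /r; case: (w) => a b /=; rewrite sqr_sqrtr //.
  by rewrite addr_ge0 // sqr_ge0.
have cs1 : c ^+ 2 + s ^+ 2 = 1.
  rewrite /c /s !expr_div_n -mulrDl -rr divff //.
  by rewrite expf_neq0 // gt_eqF.
have cb : -1 <= c <= 1.
  have : c ^+ 2 <= 1 by rewrite -cs1 lerDl sqr_ge0.
  move=> h; apply/andP; split; nra.
have sqs : Num.sqrt (1 - c ^+ 2) = `|s|.
  by rewrite -cs1 addrC addKr sqrtr_sqr.
pose y := if 0 <= s then acos c else - acos c.
have cy : cos y = c.
  by rewrite /y; case: ifP => _; rewrite ?cosN acosK // in_itv.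
have sy : sin y = s.
  rewrite /y; case: ifP => s0; rewrite ?sinN sin_acos // sqs.
    by rewrite ger0_norm.
  by rewrite ltr0_norm ?opprK // ltNge s0.
have yb : `|y| <= pi.
  have a0 := acos_ge0 cb; have api := acos_lepi cb.
  by rewrite /y; case: ifP => _; rewrite ?normrN ger0_norm.
exists (@Complex R (ln r) y); split.
  rewrite /Ex /= lnK ?posrE // /cis cy sy.
  rewrite (complexE w) /c /s; simpc.
  by congr (_ +i* _)%C; field; rewrite gt_eqF.
apply: le_trans; first exact: nc_le_ReIm.
by rewrite lerD2l.
Qed.

End CExp3.
Section Part1.
Variable R : realType.
Local Notation C := R[i].
Local Notation nc := (@Normc.normc R).
Local Notation Re := (@complex.Re R).
Local Notation Im := (@complex.Im R).
Variable p : nat -> R.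
Hypothesis p_pos : forall n, 0 < p n.

Local Notation pc n := (((p n)%:C)%C : C).

Lemma pc_neq0 n : pc n != 0.
Proof. by apply/eqP => h; have := congr1 (@complex.Re R) h => /= /eqP; rewrite gt_eqF. Qed.

Lemma nc_pc n (w : C) : nc (pc n * w) = p n * nc w.
Proof. by rewrite Normc.normcM nc_real gtr0_norm. Qed.

Lemma hpowE (a : coeffs R) m n : pc n * hpow p a m n = (pc n * a n) ^+ m.
Proof.
elim: m => [|m IH].
  by rewrite /hpow /= /unitA fmorphV divff // pc_neq0.
rewrite exprS -IH /hpow /= /hprod -/(hpow p a m); ring.
Qed.

Lemma expPartialE (a : coeffs R) N n :
  pc n * expPartial p a N n = Pe N (pc n * a n).
Proof.
rewrite /expPartial /Pe mulr_sumr; apply: eq_bigr => m _.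
by rewrite /tm -hpowE; ring.
Qed.

Lemma dist_expPartial (a g : coeffs R) N n :
  p n * nc (expPartial p a N n - g n) = nc (Pe N (pc n * a n) - pc n * g n).
Proof. by rewrite -nc_pc mulrBr expPartialE. Qed.

Lemma zero_of_small (x : R) : 0 <= x -> (forall eps, 0 < eps -> x <= eps + eps) -> x = 0.
Proof.
move=> x0 H; apply/eqP; rewrite eq_le x0 andbT; apply/negP => /negP.
rewrite -ltNge => xp.
have := H (x / 4) (divr_gt0 xp (ltr0Sn _ _)).
lra.
Qed.

Lemma part1_fwd (g : coeffs R) : invertibleA p g -> exists f, inA p f /\ is_expA p f g.
Proof.
case=> [[K1 HK1] [h [[K2 HK2] Hgh]]].
have Tgh n : (pc n * g n) * (pc n * h n) = 1.
  have E := congr1 (fun u => u n) Hgh; rewrite /hprod /unitA /= fmorphV in E.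
  have -> : pc n * g n * (pc n * h n) = pc n * (pc n * g n * h n) by ring.
  by rewrite E divff // pc_neq0.
have K10 : 0 <= K1 by apply: le_trans (HK1 0%N); rewrite mulr_ge0 // ?nc_ge0 // ltW.
have K20 : 0 <= K2 by apply: le_trans (HK2 0%N); rewrite mulr_ge0 // ?nc_ge0 // ltW.
have Ex_n n : exists z, Ex z = pc n * g n /\ nc z <= K1 + K2 + pi.
  have gn0 : pc n * g n != 0.
    by apply/eqP => h0; move: (Tgh n); rewrite h0 mul0r => /eqP; rewrite eq_sym oner_eq0.
  have [z [Hz1 Hz2]] := Ex_surj gn0; exists z; split => //.
  apply: le_trans Hz2 _; rewrite lerD2r.
  set r := nc (pc n * g n).
  have r0 : 0 < r by rewrite lt_def nc_ge0 andbT; apply/eqP => /Normc.eq0_normc /eqP; rewrite (negbTE gn0).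
  have rK1 : r <= K1 by rewrite /r nc_pc.
  have rh : r * nc (pc n * h n) = 1 by rewrite -Normc.normcM Tgh Normc.normc1.
  have rK2 : r^-1 <= K2.
    have -> : r^-1 = nc (pc n * h n).
      by apply: (mulfI (negbT (gt_eqF r0))); rewrite rh divff // gt_eqF.
    by rewrite nc_pc.
  have l1 : ln r < r := ln_sublinear r0.
  have l2 : - ln r < r^-1 by rewrite -lnV ?posrE // ln_sublinear // invr_gt0.
  rewrite ler_norml; apply/andP; split; lra.
have [zf Hzf] := choice Ex_n.
pose f : coeffs R := fun n => zf n / pc n.
have Tf n : pc n * f n = zf n by rewrite /f mulrC divfK // pc_neq0.
exists f; split.
  by exists (K1 + K2 + pi) => n; rewrite -nc_pc Tf; case: (Hzf n).
split; first by exists K1.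
move=> eps e0; have [N0 HN0] := Pe_unif (K1 + K2 + pi) e0.
exists N0 => N NN0 n.
rewrite dist_expPartial Tf; case: (Hzf n) => <- Hb.
by apply: le_trans (Pe_Ex_bound _ Hb) (HN0 _ NN0).
Qed.

Lemma part1_bwd (g : coeffs R) : (exists f, inA p f /\ is_expA p f g) -> invertibleA p g.
Proof.
case=> f [[K HK] [gA Hconv]].
have K0 : 0 <= K by apply: le_trans (HK 0%N); rewrite mulr_ge0 // ?nc_ge0 // ltW.
have Tg n : pc n * g n = Ex (pc n * f n).
  apply/eqP; rewrite -subr_eq0; apply/eqP/Normc.eq0_normc.
  apply: zero_of_small; first exact: nc_ge0.
  move=> eps e0.
  have [N1 HN1] := Hconv eps e0.
  have [N2 HN2] := Pe_unif K e0.
  set N := maxn N1 N2.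
  have b1 := HN1 N (leq_maxl _ _) n.
  have b2 := HN2 N (leq_maxr _ _).
  have zK : nc (pc n * f n) <= K by rewrite nc_pc.
  have b3 := Pe_Ex_bound N zK.
  rewrite dist_expPartial in b1.
  apply: le_trans; first exact: (nc_tri _ (Pe N (pc n * f n)) _).
  rewrite ncB; apply: lerD => //.
  by apply: le_trans b3 b2.
split => //.
exists (fun n => Ex (- (pc n * f n)) / pc n); split.
  exists (expR K) => n.
  rewrite -nc_pc mulrC divfK ?pc_neq0 // nc_Ex ler_expR.
  apply: le_trans (HK n); rewrite -nc_pc.
  apply: le_trans (nc_Re _); rewrite -normrN.
  by case: (pc n * f n) => a b /=; apply: ler_norm.
apply: funext => n; rewrite /hprod /unitA fmorphV.
have pn := pc_neq0 n.
have := Ex_N (pc n * f n); rewrite -Tg => E.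
by rewrite mulrA E mul1r.
Qed.

End Part1.
Section Chars.
Variable R : realType.
Local Notation C := R[i].
Local Notation nc := (@Normc.normc R).
Local Notation Re := (@complex.Re R).
Local Notation Im := (@complex.Im R).
Variable p : nat -> R.
Hypothesis p_pos : forall n, 0 < p n.
Local Notation pc n := (((p n)%:C)%C : C).

Lemma pcV_neq0 n : pc n != 0.
Proof. exact: pc_neq0. Qed.

Lemma inA_bound (a : coeffs R) : inA p a <-> exists K, forall n, nc (pc n * a n) <= K.
Proof.
split=> -[K HK]; exists K => n; have := HK n.
  by rewrite nc_pc.
by rewrite nc_pc.
Qed.

Lemma inA_add (a b : coeffs R) : inA p a -> inA p b -> inA p (fun n => a n + b n).
Proof.
move=> /inA_bound [K1 H1] /inA_bound [K2 H2]; apply/inA_bound.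
exists (K1 + K2) => n; rewrite mulrDr; apply: le_trans (le_normcD _ _) _.
exact: lerD.
Qed.

Lemma inA_scale (c : C) (a : coeffs R) : inA p a -> inA p (fun n => c * a n).
Proof.
move=> /inA_bound [K H]; apply/inA_bound.
exists (nc c * K) => n; rewrite mulrCA Normc.normcM.
by apply: ler_wpM2l; [exact: nc_ge0|exact: H].
Qed.

Lemma inA_hprod (a b : coeffs R) : inA p a -> inA p b -> inA p (hprod p a b).
Proof.
move=> /inA_bound [K1 H1] /inA_bound [K2 H2]; apply/inA_bound.
exists (K1 * K2) => n.
have -> : pc n * hprod p a b n = (pc n * a n) * (pc n * b n) by rewrite /hprod; ring.
rewrite Normc.normcM; apply: ler_pM => //; exact: nc_ge0.
Qed.

Lemma T_unit n : pc n * unitA p n = 1.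
Proof. by rewrite /unitA fmorphV divff // pc_neq0. Qed.

Lemma inA_unit : inA p (unitA p).
Proof. by apply/inA_bound; exists 1 => n; rewrite T_unit Normc.normc1. Qed.

Lemma hprod_unit (a : coeffs R) : hprod p a (unitA p) = a.
Proof.
apply: funext => n; rewrite /hprod -mulrA mulrCA.
have := T_unit n; rewrite /unitA => ->; by rewrite mulr1.
Qed.

Definition ind (S : set nat) : coeffs R :=
  fun n => if `[< S n >] then unitA p n else 0.

Lemma T_ind S n : pc n * ind S n = if `[< S n >] then 1 else 0.
Proof. by rewrite /ind; case: ifP => _; rewrite ?T_unit ?mulr0. Qed.

Lemma inA_ind S : inA p (ind S).
Proof.
apply/inA_bound; exists 1 => n; rewrite T_ind.
by case: ifP => _; rewrite ?Normc.normc1 ?Normc.normc0.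
Qed.

Lemma hprod_ind A B : hprod p (ind A) (ind B) = ind (A `&` B).
Proof.
apply: funext => n; rewrite /hprod /ind.
case: (asboolP (A n)) => hA; case: (asboolP (B n)) => hB;
  case: (asboolP ((A `&` B) n)) => hAB; rewrite ?mulr0 ?mul0r //.
all: try by case: hAB.
all: try by have := T_unit n => ->; rewrite mul1r.
Qed.

Lemma ind_setT : ind setT = unitA p.
Proof. by apply: funext => n; rewrite /ind; case: (asboolP (setT n)) => // h; exfalso; apply: h. Qed.

Lemma ind_set0 : ind set0 = (fun => 0).
Proof. by apply: funext => n; rewrite /ind; case: (asboolP (set0 n)) => // -[]. Qed.

Lemma ind_sub A B : A `<=` B -> ind A = hprod p (ind A) (ind B).
Proof. by move=> AB; rewrite hprod_ind; congr ind; apply/esym/setIidPl. Qed.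

Lemma ind_union A B : A `&` B = set0 ->
  ind (A `|` B) = (fun n => ind A n + ind B n).
Proof.
move=> AB; apply: funext => n; rewrite /ind.
case: (asboolP (A n)) => hA; case: (asboolP (B n)) => hB;
  case: (asboolP ((A `|` B) n)) => hAB; rewrite ?addr0 ?add0r //.
- by have : (A `&` B) n by []; rewrite AB.
- by case: hAB; left.
- by case: hAB; left.
- by case: hAB; right.
- by case: hAB.
Qed.

Section OneChar.
Variable psi : coeffs R -> C.
Hypothesis Hpsi : isChar p psi.

Lemma psi_add a b : inA p a -> inA p b -> psi (fun n => a n + b n) = psi a + psi b.
Proof. by move=> aA bA; case: Hpsi => _ H _ _ _; exact: H. Qed.
Lemma psi_scale c a : inA p a -> psi (fun n => c * a n) = c * psi a.
Proof. by move=> aA; case: Hpsi => _ _ H _ _; exact: H. Qed.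
Lemma psi_mul a b : inA p a -> inA p b -> psi (hprod p a b) = psi a * psi b.
Proof. by move=> aA bA; case: Hpsi => _ _ _ H _; exact: H. Qed.

Lemma psi_zero : psi (fun => 0) = 0.
Proof.
have -> : (fun _ : nat => (0 : C)) = (fun n => 0 * unitA p n).
  by apply: funext => n; rewrite mul0r.
by rewrite psi_scale ?mul0r //; exact: inA_unit.
Qed.

Lemma psi_unit : psi (unitA p) = 1.
Proof.
case: Hpsi => _ _ _ Hm [a [aA a0]].
have := Hm _ _ aA inA_unit; rewrite hprod_unit => E.
apply: (mulfI a0); rewrite -E mulr1 //.
Qed.

Lemma psi_ind01 S : psi (ind S) = 0 \/ psi (ind S) = 1.
Proof.
have := psi_mul (inA_ind S) (inA_ind S); rewrite hprod_ind setIid => E.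
have : psi (ind S) * (psi (ind S) - 1) = 0 by rewrite mulrBr mulr1 -E subrr.
move/eqP; rewrite mulf_eq0 subr_eq0 => /orP [] /eqP; by [left|right].
Qed.

Lemma psi_ind_sub A B : A `<=` B -> psi (ind A) = 1 -> psi (ind B) = 1.
Proof.
move=> AB h; have E := congr1 psi (ind_sub AB).
rewrite (psi_mul (inA_ind A) (inA_ind B)) h mul1r in E.
by rewrite -E.
Qed.

Lemma psi_bound (a : coeffs R) (K : R) : inA p a ->
  (forall n, nc (pc n * a n) <= K) -> nc (psi a) <= K.
Proof.
move=> aA HK; rewrite leNgt; apply/negP => Klt.
set c := psi a.
pose b : coeffs R := fun n => a n + (- c) * unitA p n.
have bA : inA p b by apply: inA_add => //; apply: inA_scale; exact: inA_unit.
have psib : psi b = 0.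
  rewrite /b psi_add //; last by apply: inA_scale; exact: inA_unit.
  by rewrite psi_scale ?psi_unit ?mulr1 ?subrr //; exact: inA_unit.
have Tb n : pc n * b n = pc n * a n - c by rewrite /b mulrDr mulrCA T_unit mulr1.
have dpos : 0 < nc c - K by rewrite subr_gt0.
have Tbge n : nc c - K <= nc (pc n * b n).
  rewrite Tb lerBlDr; have t := nc_tri c (pc n * a n) 0.
  rewrite !subr0 in t; apply: le_trans t _.
  by rewrite ncB; apply: lerD.
have Tbne n : pc n * b n != 0.
  apply/eqP => h0; have := Tbge n; rewrite h0 Normc.normc0 leNgt dpos //.
pose hi : coeffs R := fun n => (pc n * b n)^-1 / pc n.
have hiA : inA p hi.
  apply/inA_bound; exists (nc c - K)^-1 => n.
  rewrite /hi mulrC divfK ?pc_neq0 // Normc.normcV.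
  rewrite lef_pV2 ?posrE //.
  by apply: lt_le_trans dpos (Tbge n).
have : hprod p b hi = unitA p.
  apply: funext => n; rewrite /hprod /hi.
  by rewrite /unitA fmorphV mulrA divff ?mul1r // Tbne.
move/(congr1 psi); rewrite psi_mul // psib mul0r psi_unit => /eqP.
by rewrite eq_sym oner_eq0.
Qed.

End OneChar.
End Chars.
Section UltraChar.
Variable R : realType.
Local Notation C := R[i].
Local Notation nc := (@Normc.normc R).
Local Notation Re := (@complex.Re R).
Local Notation Im := (@complex.Im R).
Variable p : nat -> R.
Hypothesis p_pos : forall n, 0 < p n.
Local Notation pc n := (((p n)%:C)%C : C).
Variable G : set_system nat.
Hypothesis UG : UltraFilter G.

Lemma ultra_fmap (x : nat -> R) : UltraFilter (x @ G).
Proof.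
split; first exact: fmap_proper_filter.
move=> H HF sub; apply/seteqP; split; last exact: sub.
move=> A HA.
have [//|GC] := in_ultra_setVsetC (x @^-1` A) UG.
have HC : H (~` A) by apply: sub.
have : H (A `&` ~` A) by apply: filterI.
by rewrite setICr => /filter_not_empty.
Qed.

Lemma ulim_cvg (x : nat -> R) (K : R) : (forall n, `|x n| <= K) -> x @ G --> lim (x @ G).
Proof.
move=> HK.
have Hc := @segment_compact R (- K) K.
rewrite compact_ultra in Hc.
have GA : G (x @^-1` `[- K, K]).
  apply: filterS (@filterT _ G _) => n _ /=.
  by rewrite in_itv /= -ler_norml.
have [l [_ hl]] := Hc (x @ G) (ultra_fmap x) GA.
exact: (cvgP _ hl).
Qed.

Definition ReT (a : coeffs R) n := Re (pc n * a n).
Definition ImT (a : coeffs R) n := Im (pc n * a n).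

Lemma ReT_cvg a : inA p a -> ReT a @ G --> lim (ReT a @ G).
Proof.
move=> /(inA_bound p_pos) [K HK]; apply: (@ulim_cvg _ K) => n.
by apply: le_trans (nc_Re _) (HK n).
Qed.

Lemma ImT_cvg a : inA p a -> ImT a @ G --> lim (ImT a @ G).
Proof.
move=> /(inA_bound p_pos) [K HK]; apply: (@ulim_cvg _ K) => n.
by apply: le_trans (nc_Im _) (HK n).
Qed.

Lemma cvg_linB (f g h k : nat -> R) (A B Cc D : R) : f @ G --> A -> g @ G --> B ->
  h @ G --> Cc -> k @ G --> D -> (fun n => f n * g n - h n * k n) @ G --> A * B - Cc * D.
Proof. by move=> ? ? ? ?; apply: cvgB; apply: cvgM. Qed.

Lemma cvg_linD (f g h k : nat -> R) (A B Cc D : R) : f @ G --> A -> g @ G --> B ->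
  h @ G --> Cc -> k @ G --> D -> (fun n => f n * g n + h n * k n) @ G --> A * B + Cc * D.
Proof. by move=> ? ? ? ?; apply: cvgD; apply: cvgM. Qed.

Definition phiG (a : coeffs R) : C :=
  if `[< inA p a >] then Complex (lim (ReT a @ G)) (lim (ImT a @ G)) else 0.

Lemma phiGE a : inA p a -> phiG a = Complex (lim (ReT a @ G)) (lim (ImT a @ G)).
Proof. by move=> aA; rewrite /phiG asboolT. Qed.

Lemma limG_eq (f : nat -> R) (l : R) : f @ G --> l -> lim (f @ G) = l.
Proof. by move=> h; apply: cvg_lim. Qed.

Lemma phiG_char : isChar p phiG.
Proof.
split.
- by move=> a aA; rewrite /phiG asboolF.
- move=> a b aA bA; have abA := inA_add p_pos aA bA.
  rewrite !phiGE //.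
  have -> : ReT (fun n => a n + b n) = ReT a \+ ReT b.
    by apply: funext => n; rewrite /ReT /= mulrDr ReD.
  have -> : ImT (fun n => a n + b n) = ImT a \+ ImT b.
    by apply: funext => n; rewrite /ImT /= mulrDr ImD.
  rewrite (limG_eq (cvgD (ReT_cvg aA) (ReT_cvg bA))).
  by rewrite (limG_eq (cvgD (ImT_cvg aA) (ImT_cvg bA))).
- move=> c a aA; have caA := inA_scale p_pos c aA.
  rewrite !phiGE //.
  have -> : ReT (fun n => c * a n) = (fun n => Re c * ReT a n - Im c * ImT a n).
    apply: funext => n; rewrite /ReT /ImT /= mulrCA.
    by move: (c) => [u v]; case: (pc n * a n) => s t.
  have -> : ImT (fun n => c * a n) = (fun n => Re c * ImT a n + Im c * ReT a n).
    apply: funext => n; rewrite /ReT /ImT /= mulrCA.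
    by move: (c) => [u v]; case: (pc n * a n) => s t /=; rewrite addrC.
  have hc1 : (fun n => Re c * ReT a n - Im c * ImT a n) @ G -->
     Re c * lim (ReT a @ G) - Im c * lim (ImT a @ G).
    by apply: cvg_linB; [exact: cvg_cst|exact: ReT_cvg aA|exact: cvg_cst|exact: ImT_cvg aA].
  have hc2 : (fun n => Re c * ImT a n + Im c * ReT a n) @ G -->
     Re c * lim (ImT a @ G) + Im c * lim (ReT a @ G).
    by apply: cvg_linD; [exact: cvg_cst|exact: ImT_cvg aA|exact: cvg_cst|exact: ReT_cvg aA].
  rewrite (limG_eq hc1) (limG_eq hc2).
  by move: (c) => [u v] /=; simpc.
- move=> a b aA bA; have abA := inA_hprod p_pos aA bA.
  rewrite !phiGE //.
  have E n : pc n * hprod p a b n = (pc n * a n) * (pc n * b n) by rewrite /hprod; ring.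
  have -> : ReT (hprod p a b) = (fun n => ReT a n * ReT b n - ImT a n * ImT b n).
    apply: funext => n; rewrite /ReT /ImT E.
    by case: (pc n * a n) => s t; case: (pc n * b n).
  have -> : ImT (hprod p a b) = (fun n => ReT a n * ImT b n + ImT a n * ReT b n).
    apply: funext => n; rewrite /ReT /ImT E.
    by case: (pc n * a n) => s t; case: (pc n * b n).
  have hc1 : (fun n => ReT a n * ReT b n - ImT a n * ImT b n) @ G -->
     lim (ReT a @ G) * lim (ReT b @ G) - lim (ImT a @ G) * lim (ImT b @ G).
    by apply: cvg_linB; [exact: ReT_cvg aA|exact: ReT_cvg bA|exact: ImT_cvg aA|exact: ImT_cvg bA].
  have hc2 : (fun n => ReT a n * ImT b n + ImT a n * ReT b n) @ G -->
     lim (ReT a @ G) * lim (ImT b @ G) + lim (ImT a @ G) * lim (ReT b @ G).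
    by apply: cvg_linD; [exact: ReT_cvg aA|exact: ImT_cvg bA|exact: ImT_cvg aA|exact: ReT_cvg bA].
  rewrite (limG_eq hc1) (limG_eq hc2).
  by simpc.
- exists (unitA p); split; first exact: (inA_unit p_pos).
  rewrite phiGE; last exact: (inA_unit p_pos).
  have -> : ReT (unitA p) = (fun => 1) by apply: funext => n; rewrite /ReT (T_unit p_pos).
  have -> : ImT (unitA p) = (fun => 0) by apply: funext => n; rewrite /ImT (T_unit p_pos).
  rewrite !(limG_eq (cvg_cst _)).
  by apply/eqP => -[] /eqP; rewrite oner_eq0.
Qed.

Lemma phiG_near a (eps : R) : inA p a -> 0 < eps ->
  G [set n | nc (pc n * a n - phiG a) < eps].
Proof.
move=> aA e0.
have PG : ProperFilter G := @ultra_proper _ _ UG.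
have FG : Filter G := @filter_filter _ _ PG.
have e2 : 0 < eps / 2 by rewrite divr_gt0.
have h1 := (cvgrPdist_lt _ _).1 (ReT_cvg aA) _ e2.
have h2 := (cvgrPdist_lt _ _).1 (ImT_cvg aA) _ e2.
apply: filterS (@filterI _ G FG _ _ (h1 FG) (h2 FG)) => n [/= r1 r2].
apply: le_lt_trans; first apply: nc_le_ReIm.
rewrite phiGE // ReB ImB /=.
rewrite -[ReT a n]/(Re (pc n * a n)) -[ImT a n]/(Im (pc n * a n)) in r1 r2.
rewrite (distrC (Re _)) (distrC (Im _)).
by rewrite [eps](splitr eps) ltrD.
Qed.

End UltraChar.
Section Cech.
Variable R : realType.
Local Notation C := R[i].
Local Notation nc := (@Normc.normc R).
Variable p : nat -> R.
Hypothesis p_pos : forall n, 0 < p n.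
Local Notation pc n := (((p n)%:C)%C : C).

Definition NS (S : set nat) : set (coeffs R -> C) :=
  [set psi | isChar p psi /\ psi (ind p S) = 1].

Lemma NS_open S : gelfand_open p (NS S).
Proof.
split; first by move=> psi [].
move=> phi [phiC phi1].
exists 1%N, (fun _ => ind p S), 1; split; first by move=> i _; exact: inA_ind.
split; first exact: ltr01.
move=> psi psiC /(_ 0%N isT); rewrite phi1 => H; split => //.
case: (psi_ind01 p_pos psiC S) => // h0.
by move: H; rewrite h0 sub0r normcN Normc.normc1 ltxx.
Qed.

Lemma NS_sub A B : A `<=` B -> NS A `<=` NS B.
Proof. by move=> AB psi [pC h]; split => //; apply: (psi_ind_sub p_pos pC AB). Qed.

Lemma filter_fin (G : set_system nat) (FG : Filter G) (P : nat -> nat -> Prop) k :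
  (forall j, (j < k)%N -> G [set n | P j n]) ->
  G [set n | forall j, (j < k)%N -> P j n].
Proof.
elim: k => [|k IH] H.
  by apply: filterS (@filterT _ G FG) => n _ j.
have h1 := IH (fun j jk => H j (ltnW jk)).
have h2 := H k (ltnSn k).
apply: filterS (@filterI _ G FG _ _ h1 h2) => n [/= H1 H2] j.
rewrite ltnS leq_eqVlt => /orP [/eqP -> //|]; exact: H1.
Qed.

Section Cover.
Variables (I : Type) (U : I -> set (coeffs R -> C)).
Hypothesis opU : forall i, gelfand_open p (U i).
Hypothesis cov : maxIdealSpace p `<=` \bigcup_i U i.

Definition good (S : set nat) := exists i, NS S `<=` U i.
Definition small (S : set nat) := exists m (A : nat -> set nat),
  S `<=` [set n | exists l, (l < m)%N /\ A l n] /\ forall l, (l < m)%N -> good (A l).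

Lemma small_sub S S' : S `<=` S' -> small S' -> small S.
Proof. by move=> SS [m [A [H1 H2]]]; exists m, A; split => // n /SS /H1. Qed.

Lemma small_union S1 S2 : small S1 -> small S2 -> small (S1 `|` S2).
Proof.
move=> [m1 [A1 [H1 G1]]] [m2 [A2 [H2 G2]]].
exists (m1 + m2)%N, (fun l => if (l < m1)%N then A1 l else A2 (l - m1)%N); split.
  move=> n [/H1 [l [lm An]]|/H2 [l [lm An]]].
    by exists l; rewrite lm; split => //; lia.
  exists (m1 + l)%N; split; first lia.
  have -> : (m1 + l < m1)%N = false by lia.
  by rewrite addKn.
move=> l lm; case: ifP => lm1; first exact: G1.
apply: G2; lia.
Qed.

Lemma small_setT : small setT.
Proof.
apply: contrapT => nsT.
pose Fam := [set B : set nat | small (~` B)].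
have FamF : Filter Fam.
  split.
  - exists 0%N, (fun _ => set0); split => // n; by rewrite setCT.
  - move=> B1 B2 h1 h2; rewrite /Fam /= setCI; exact: small_union.
  - move=> B1 B2 B12 h; apply: small_sub h; exact: subsetC.
have FamP : ProperFilter Fam.
  by apply: Build_ProperFilter => //; rewrite /Fam /= setC0.
have [G [UG FG]] := ultraFilterLemma FamP.
have PG : ProperFilter G := @ultra_proper _ _ UG.
have FiG : Filter G := @filter_filter _ _ PG.
pose phi := phiG p G.
have phiC : isChar p phi := phiG_char p_pos UG.
have [i _ Uphi] := cov phiC.
have [_ Hop] := opU i.
have [k [fs [eps [fsA [e0 Hnb]]]]] := Hop phi Uphi.
have e2 : 0 < eps / 2 by rewrite divr_gt0.
pose S := [set n | forall j, (j < k)%N -> nc (pc n * fs j n - phi (fs j)) < eps / 2].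
have GS : G S.
  apply: filter_fin => j jk; exact: (phiG_near p_pos UG (fsA j jk) e2).
have gS : good S.
  exists i => psi [psiC psiS].
  apply: Hnb => // j jk.
  set c := phi (fs j).
  pose b := hprod p (fun n => fs j n + (- c) * unitA p n) (ind p S).
  have bA0 : inA p (fun n => fs j n + (- c) * unitA p n).
    apply: (inA_add p_pos (fsA j jk)); apply: inA_scale => //; exact: inA_unit.
  have bA : inA p b by apply: inA_hprod => //; exact: inA_ind.
  have psib : psi b = psi (fs j) - c.
    rewrite /b (psi_mul psiC bA0 (inA_ind p_pos S)) psiS mulr1.
    rewrite (psi_add psiC (fsA j jk)); last by apply: inA_scale => //; exact: inA_unit.
    by rewrite (psi_scale psiC) ?(psi_unit p_pos psiC) ?mulr1 //; exact: inA_unit.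
  have : nc (psi b) <= eps / 2.
    apply: (psi_bound p_pos psiC bA) => n.
    have -> : pc n * b n = (pc n * fs j n - c) * (pc n * ind p S n).
      have pn := pc_neq0 p_pos n.
      by rewrite /b /hprod /unitA fmorphV; field.
    rewrite (T_ind p_pos); case: (asboolP (S n)) => hS.
      by rewrite mulr1; apply: ltW; apply: hS.
    by rewrite mulr0 Normc.normc0 ltW.
  rewrite psib => hb; apply: le_lt_trans hb _.
  by rewrite ltr_pdivrMr // ltr_pMr // ltr1n.
have sS : small S.
  exists 1%N, (fun _ => S); split; last by move=> l _; exact: gS.
  by move=> n Sn; exists 0%N.
have GnS : G (~` S) by apply: FG; rewrite /Fam /= setCK.
have := @filterI _ G FiG _ _ GS GnS.
by rewrite setICr => /filter_not_empty.
Qed.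

End Cover.

Lemma cech_trivial : cech_H1_Z_trivial (maxIdealSpace p) (gelfand_open p).
Proof.
move=> I U opU cov g cocyc.
have [m [A [Acov Agood]]] := small_setT opU cov.
pose Cum m' := [set n | exists l, (l < m')%N /\ A l n].
pose Bd l := A l `\` Cum l.
have m0 : (0 < m)%N.
  by have [l [lm _]] := Acov 0%N Logic.I; apply: leq_ltn_trans lm.
have [i0 _] := Agood 0%N m0.
have Htau : forall l, exists i, (l < m)%N -> NS (A l) `<=` U i.
  move=> l; case: (ltnP l m) => lm.
    by have [i Hi] := Agood l lm; exists i.
  by exists i0.
have [tau Htau'] := choice Htau.
pose V l := [set psi | (l < m)%N /\ NS (Bd l) psi].
have BdA l : Bd l `<=` A l by move=> n [].
have Bdisj j k : (j < k)%N -> Bd j `&` Bd k = set0.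
  move=> jk; apply/seteqP; split => // n [[Aj _] [_ nC]].
  by apply: nC; exists j.
have VU j : V j `<=` U (tau j).
  move=> psi [jm Hpsi]; apply: (Htau' j jm); exact: (NS_sub (BdA j)).
exists nat, V, tau; split.
- move=> j; split; first by move=> psi [_ []].
  move=> phi [jm Nphi].
  have [_ Hop] := NS_open (Bd j).
  have [k [fs [eps [fsA [e0 Hnb]]]]] := Hop phi Nphi.
  exists k, fs, eps; split => //; split => // psi psiX Hclose.
  by split => //; apply: Hnb.
- move=> psi psiX.
  have psiC : isChar p psi := psiX.
  have claim m' : (forall l, (l < m')%N -> psi (ind p (Bd l)) = 0) ->
                  psi (ind p (Cum m')) = 0.
    elim: m' => [|m' IH] H.
      have -> : Cum 0%N = set0 by apply/seteqP; split => // n [l []].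
      by rewrite ind_set0; exact: psi_zero.
    have Ceq : Cum m'.+1 = Cum m' `|` Bd m'.
      apply/seteqP; split => n.
        move=> [l [lm An]]; case: (pselect (Cum m' n)) => hc; first by left.
        right; split => //.
        have nl : ~ (l < m')%N by move=> h; apply: hc; exists l.
        have -> : m' = l by lia.
        done.
      case=> [[l [lm An]]|[An _]]; first by exists l; split => //; apply: ltnW.
      by exists m'.
    have Cdisj : Cum m' `&` Bd m' = set0.
      by apply/seteqP; split => // n [hc [_ hn]].
    rewrite Ceq (ind_union p Cdisj).
    rewrite (psi_add psiC (inA_ind p_pos _) (inA_ind p_pos _)).
    by rewrite IH ?H ?addr0 // => l lm; apply: H; apply: ltnW.
  suff [l [lm hl]] : exists l, (l < m)%N /\ psi (ind p (Bd l)) = 1.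
    by exists l => //; split => //; split.
  apply: contrapT => hne.
  have : psi (ind p (Cum m)) = 0.
    apply: claim => l lm.
    case: (psi_ind01 p_pos psiC (Bd l)) => // h1.
    by exfalso; apply: hne; exists l.
  have -> : Cum m = setT by apply/seteqP; split => // n _; exact: Acov.
  rewrite (ind_setT p) (psi_unit p_pos psiC) => /eqP.
  by rewrite oner_eq0.
- exact: VU.
exists (fun _ => 0) => j k [psi [[psiX [jm Nj]] [km Nk]]].
rewrite subrr.
have jk : j = k.
  apply: contrapT => jk.
  have psiC : isChar p psi := psiX.
  have H2 : psi (ind p (Bd j `&` Bd k)) = 1.
    rewrite -(hprod_ind p_pos).
    by rewrite (psi_mul psiC (inA_ind p_pos _) (inA_ind p_pos _)) Nj.2 Nk.2 mulr1.
  have : Bd j `&` Bd k = set0.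
    case: (ltngtP j k) => [h|h|h]; first exact: Bdisj.
      by rewrite setIC; exact: Bdisj.
    by case: jk.
  move=> E; rewrite E (ind_set0 p) (psi_zero p_pos psiC) in H2.
  by move/eqP: H2; rewrite eq_sym oner_eq0.
subst k.
have Ui : U (tau j) psi by apply: VU; split.
have := cocyc (tau j) (tau j) (tau j).
move=> /(_ (ex_intro _ psi (conj (conj (conj psiX Ui) Ui) Ui))) => h.
by apply: (addrI (g (tau j) (tau j))); rewrite addr0 h.
Qed.

End Cech.
Unset Implicit Arguments.

Theorem mainTheorem11 (R : realType) (p : nat -> R)
  (p_pos : forall n, 0 < p n)
  (p_growth : forall M : R, exists N : nat, forall n : nat, (N <= n)%N ->
                M <= p n `^ (n%:R)^-1) :
  (forall g : coeffs R, invertibleA p g <-> exists f : coeffs R, inA p f /\ is_expA p f g)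
  /\ cech_H1_Z_trivial (maxIdealSpace p) (gelfand_open p).
Proof.
split.
  move=> g; split; [exact: part1_fwd p_pos g | exact: part1_bwd p_pos g].
exact: cech_trivial p_pos.
Qed.
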